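(* Let $\Omega$ be finite, $M$ finite, and $s$ a proper scoring rule on the set $\mathcal P$ of probability functions on $\Omega$, with values in $[-\infty,M]^\Omega$. Let $H=\{p\in\hat{\mathcal P}: s(p)\text{ is finite}\}$ and let $\bar H$ be its closure. For any $p\in\bar H$, the limit of $\langle q,s(q)\rangle$ as $q$ tends to $p$ within $H$ exists (in $[-\infty,M]$). If $s(p)$ is finite, this limit equals $\langle p,s(p)\rangle$. Finally, if $(p_n)$ is a sequence in $H$ converging to $p\in\bar H$ such that $\lim_n s(p_n)=r$, then $\langle p,r\rangle=\lim_n\langle p_n,s(p_n)\rangle$.
   Context: $\hat{\mathcal P}$ is the set of functions $q:\Omega\to[0,1]$ with $\sum_\omega q(\omega)=1$, identified with probabilities via $q(\omega)=p(\{\omega\})$, with the Euclidean topology; $s(q)$ for $q\in\hat{\mathcal P}$ means $s$ of the corresponding probability. $[-\infty,M]^\Omega$ has the product of extended-real topologies. $\langle f,g\rangle=\sum_\omega f(\omega)\cdot g(\omega)$ for $f\in[0,1]^\Omega$, $g\in[-\infty,\infty)^\Omega$, with $a\cdot0=0\cdot a=0$ for all extended reals $a$; so $E_p g=\langle\hat p,g\rangle$ where $E_pg=\sum_{p(\{\omega\})\ne0}p(\{\omega\})g(\omega)$. $s$ is proper if $\langle p,s(p)\rangle\ge\langle p,s(q)\rangle$ for all $p,q\in\hat{\mathcal P}$. A score is finite if all its values are finite. *)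

(* Defs.v *)
From HB Require Import structures.
From mathcomp Require Import all_boot all_order all_algebra.
From mathcomp Require Import all_classical all_reals all_analysis.
Set Implicit Arguments. Unset Strict Implicit. Unset Printing Implicit Defensive.
Import Order.TTheory GRing.Theory Num.Theory.
Import numFieldNormedType.Exports.
Local Open Scope classical_set_scope.
Local Open Scope ring_scope.

(* Points of \hat P are functions Omega -> R; the
   Euclidean topology on R^Omega (Omega finite) is the product topology
   {ptws Omega -> R}. *)

Definition simplex (R : realType) (Omega : finType) : set (Omega -> R) :=
  [set q | (forall w, 0 <= q w <= 1) /\ \sum_(w : Omega) q w = 1].

(* <f, g> = sum_w f(w) * g(w), with 0 * (-oo) = 0 (MathComp's ereal convention) *)
Definition dotE (R : realType) (Omega : finType) (f : Omega -> R)
  (g : Omega -> \bar R) : \bar R :=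
  (\sum_(w : Omega) ((f w)%:E * g w))%E.

Definition proper_score (R : realType) (Omega : finType)
  (s : (Omega -> R) -> (Omega -> \bar R)) : Prop :=
  forall p q, simplex p -> simplex q -> (dotE p (s q) <= dotE p (s p))%E.

Definition finH (R : realType) (Omega : finType)
  (s : (Omega -> R) -> (Omega -> \bar R)) :
  set (@prod_topology Omega (fun=> numFieldTopology.Real_sort__canonical__topology_structure_Topological R)) :=
  [set p : {ptws Omega -> R} | simplex (p : Omega -> R) /\ forall w, s p w \is a fin_num].

(* Main.v *)
Require Import Defs.
From HB Require Import structures.
From mathcomp Require Import all_boot all_order all_algebra.
From mathcomp Require Import all_classical all_reals all_analysis.
From mathcomp Require Import lra ring.
Import Order.TTheory GRing.Theory Num.Theory.
Import numFieldNormedType.Exports.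
Local Open Scope classical_set_scope.
Local Open Scope ring_scope.
Set Implicit Arguments. Unset Strict Implicit.

Lemma adde_def_noinf (R : realType) (x y : \bar R) :
  x != +oo%E -> y != +oo%E -> (x +? y)%E.
Proof. by move: x y => [x| |] [y| |]. Qed.

Lemma cvge_sum_seq (R : realType) (I : Type) (r : seq I)
  (f : I -> nat -> \bar R) (l : I -> \bar R) :
  (forall i, l i != +oo%E) -> (forall i, f i @ \oo --> l i) ->
  (fun n => \sum_(i <- r) f i n)%E @ \oo --> (\sum_(i <- r) l i)%E /\
  (\sum_(i <- r) l i)%E != +oo%E.
Proof.
move=> hl hf; elim: r => [|x r [IH1 IH2]].
  rewrite big_nil; under eq_fun do rewrite big_nil.
  by split => //; exact: cvg_cst.
rewrite big_cons; under eq_fun do rewrite big_cons.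
split; first by apply: cvgeD => //; apply: adde_def_noinf.
by move: (l x) (\sum_(i <- r) l i)%E (hl x) IH2 => [a| |] [b| |].
Qed.

Lemma filterS' T (F : set_system T) (FF : Filter F) (P Q : set T) :
  (forall x, P x -> Q x) -> F P -> F Q.
Proof. by move=> h; apply: filterS. Qed.

Section L3.
Variables (R : realType) (Omega : finType) (M : R)
  (s : (Omega -> R) -> (Omega -> \bar R)).
Hypothesis hM : forall p, simplex p -> forall w, (s p w <= M%:E)%E.
Hypothesis hpr : proper_score s.

Definition lin (q c : Omega -> R) : R := \sum_w q w * c w.
Definition cf (q : Omega -> R) : Omega -> R := fun w => fine (s q w).
Definition Hs (q : Omega -> R) : Prop := simplex q /\ forall w, s q w \is a fin_num.

Lemma finH_Hs (q : {ptws Omega -> R}) : finH s q <-> Hs q.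
Proof. by []. Qed.

Lemma dotE_lin q q' : (forall w, s q' w \is a fin_num) ->
  dotE q (s q') = (lin q (cf q'))%:E.
Proof.
move=> hf; rewrite /dotE /lin -sumEFin; apply: eq_bigr => w _.
by rewrite /cf EFinM fineK.
Qed.

Lemma cf_le q : Hs q -> forall w, cf q w <= M.
Proof.
move=> [sq hf] w; rewrite /cf -lee_fin fineK //; exact: hM.
Qed.

Lemma lin_le q c : simplex q -> (forall w, c w <= M) -> lin q c <= M.
Proof.
move=> [q01 q1] hc; rewrite /lin.
apply: (@le_trans _ _ (\sum_w q w * M)).
  apply: ler_sum => w _; apply: ler_wpM2l => //.
  by case/andP: (q01 w).
by rewrite -mulr_suml q1 mul1r.
Qed.

Lemma lin_prop p q : Hs p -> Hs q -> lin p (cf q) <= lin p (cf p).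
Proof.
move=> [sp fp] [sq fq]; rewrite -lee_fin -!dotE_lin //; exact: hpr.
Qed.

Lemma dec t p q c : 0 < t -> simplex p -> simplex q ->
  (forall w, 0 < p w -> p w - q w <= t * p w) -> (forall w, c w <= M) ->
  lin q c <= (1 - t) * lin p c + t * M.
Proof.
move=> t0 [p01 p1] [q01 q1] hpq hc.
have E : lin q c = (1 - t) * lin p c + \sum_w (q w - (1 - t) * p w) * c w.
  rewrite /lin mulr_sumr -big_split /=; apply: eq_bigr => w _; ring.
have d0 : forall w, 0 <= q w - (1 - t) * p w.
  move=> w; have /andP[p0 _] := p01 w; have /andP[q0 _] := q01 w.
  have [pp|pn] := ltP 0 (p w).
    by have := hpq w pp; lra.
  have -> : p w = 0 by apply/eqP; rewrite eq_le pn p0.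
  by rewrite mulr0 subr0.
rewrite E lerD2l.
apply: (@le_trans _ _ (\sum_w (q w - (1 - t) * p w) * M)).
  by apply: ler_sum => w _; apply: ler_wpM2l.
rewrite -mulr_suml sumrB -mulr_sumr q1 p1.
by have -> : 1 - (1 - t) * 1 = t by ring.
Qed.

Variable q0 : Omega -> R.
Hypothesis hq0 : Hs q0.

Definition S p := [set x | exists q, Hs q /\ x = lin p (cf q)].
Definition g p := sup (S p).

Lemma hasS p : simplex p -> has_sup (S p).
Proof.
move=> sp; split; first by exists (lin p (cf q0)), q0.
exists M => x [q [hq ->]]; apply: lin_le => //; exact: cf_le.
Qed.

Lemma g_ge p q : simplex p -> Hs q -> lin p (cf q) <= g p.
Proof. by move=> sp hq; have := sup_upper_bound (hasS sp); apply; exists q. Qed.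

Lemma g_le p x : (forall q, Hs q -> lin p (cf q) <= x) -> g p <= x.
Proof.
move=> h; apply: ge_sup; first by exists (lin p (cf q0)), q0.
by move=> y [q [hq ->]]; apply: h.
Qed.

Lemma g_H q : Hs q -> g q = lin q (cf q).
Proof.
move=> hq; apply/eqP; rewrite eq_le; apply/andP; split.
  by apply: g_le => q' hq'; apply: lin_prop.
by apply: g_ge => //; case: hq.
Qed.

Lemma g_up t p q : 0 < t -> t <= 1 -> simplex p -> simplex q ->
  (forall w, 0 < p w -> p w - q w <= t * p w) ->
  g q <= (1 - t) * g p + t * M.
Proof.
move=> t0 t1 sp sq h; apply: g_le => q' hq'.
apply: le_trans (dec t0 sp sq h (cf_le hq')) _.
rewrite lerD2r; apply: ler_wpM2l; first by lra.
exact: g_ge.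
Qed.


Lemma near_coord (p : {ptws Omega -> R}) w e : 0 < e ->
  \forall q \near p, `|p w - (q : Omega -> R) w| < e.
Proof.
move=> e0.
have h : (fun q : {ptws Omega -> R} => q w) @ nbhs p --> p w.
  exact: (@proj_continuous Omega (fun _ => R) w p).
exact: (cvgr_dist_lt _ _ h e e0).
Qed.

Lemma lin_diff p q c d : (forall w, `|p w - q w| <= d) ->
  lin p c - lin q c <= d * \sum_w `|c w|.
Proof.
move=> h; rewrite /lin -sumrB mulr_sumr; apply: ler_sum => w _.
rewrite -mulrBl; apply: le_trans (ler_norm _) _; rewrite normrM.
apply: ler_wpM2r => //.
Qed.

Lemma g_cont (p : {ptws Omega -> R}) e : simplex p -> 0 < e ->
  \forall q \near p, simplex (q : Omega -> R) -> `|g p - g q| <= e.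
Proof.
move=> sp e0.
have FF := nbhs_filter p.
have e20 : 0 < e / 2 by lra.
have [x [q' [hq' ->]] hx] := sup_adherent e20 (hasS sp).
set C := \sum_w `|cf q' w|.
have C0 : 0 <= C by apply: sumr_ge0.
set d := e / (2 * (C + 1)).
have d0 : 0 < d by apply: divr_gt0 => //; lra.
have dC : d * C <= e / 2.
  rewrite /d mulrAC ler_pdivrMr; last by lra.
  have -> : e / 2 * (2 * (C + 1)) = e * (C + 1) by field.
  nra.
set A := `|M - g p|.
have A0 : 0 <= A by rewrite /A normr_ge0.
set t := e / (e + A + 1).
have t0 : 0 < t by apply: divr_gt0 => //; lra.
have t1 : t <= 1.
  by rewrite /t ler_pdivrMr; lra.
have tA : t * A <= e.
  by rewrite /t mulrAC ler_pdivrMr; [nra | lra].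
have N1 := filter_forall FF (fun w => near_coord p w d0).
have N2w : forall w, \forall q \near p, 0 < p w ->
    `|p w - (q : Omega -> R) w| < t * p w.
  move=> w; have [pp|pn] := ltP 0 (p w).
    by apply: filterS (near_coord p w (mulr_gt0 t0 pp)) => q h _.
  by apply: filterS (near_coord p w d0) => q _ //.
have N2 := filter_forall FF N2w.
apply: (filterS2 FF _ N1 N2) => q h1 h2 sq.
have up : g q <= (1 - t) * g p + t * M.
  apply: g_up => // w pw; have := h2 w pw.
  by rewrite ltr_norml => /andP[_ /ltW].
have lo : lin p (cf q') - lin q (cf q') <= d * C.
  by apply: lin_diff => w; apply: ltW.
have lo2 : lin q (cf q') <= g q by apply: g_ge.
have MA : M - g p <= A by apply: ler_norm.
have tMA : t * (M - g p) <= t * A by apply: ler_wpM2l => //; apply: ltW.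
clearbody t A d C.
have hx2 : g p - e / 2 < lin p (cf q') := hx.
rewrite ler_norml; apply/andP; split; lra.
Qed.


Lemma closure_simplex (p : {ptws Omega -> R}) :
  closure (finH s) p -> simplex (p : Omega -> R).
Proof.
move=> hcl; have FF := nbhs_filter p.
have close : forall d, 0 < d -> exists q, Hs q /\ forall w, `|p w - q w| <= d.
  move=> d d0; have N := filter_forall FF (fun w => near_coord p w d0).
  have [q [hq hq2]] := hcl _ N.
  by exists q; split => // w; apply: ltW.
have p01 : forall w, 0 <= p w <= 1.
  move=> w; apply/andP; split.
    rewrite leNgt; apply/negP => pn.
    have [q [[[q01 _] _] h]] := close (- p w / 2) ltac:(lra).
    have := h w; have /andP[qq0 _] := q01 w.
    rewrite ler_norml => /andP[a b]; lra.
  rewrite leNgt; apply/negP => pn.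
  have [q [[[q01 _] _] h]] := close ((p w - 1) / 2) ltac:(lra).
  have := h w; have /andP[_ q1] := q01 w.
  rewrite ler_norml => /andP[a b]; lra.
split => //.
apply/eqP; rewrite -subr_eq0 -normr_eq0; apply/negP => /negP D0.
set D := `|\sum_w p w - 1| in D0.
have D0' : 0 < D by rewrite lt_def D0 normr_ge0.
set N : R := #|Omega|%:R.
have N0 : 0 <= N by rewrite /N ler0n.
have [q [[[_ q1] _] h]] := close (D / (N + 1)) ltac:(apply: divr_gt0; lra).
have S1 : D <= \sum_w `|p w - q w|.
  have -> : D = `|\sum_w (p w - q w)| by rewrite sumrB q1.
  exact: ler_norm_sum.
have S2 : \sum_w `|p w - q w| <= \sum_(w : Omega) (D / (N + 1)).
  by apply: ler_sum => w _; apply: h.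
rewrite sumr_const -mulr_natl in S2.
have : D <= N * (D / (N + 1)) by apply: le_trans S1 S2.
rewrite mulrA ler_pdivlMr; last by lra.
nra.
Qed.


Lemma G_cvg (p : {ptws Omega -> R}) : closure (finH s) p ->
  (fun q : {ptws Omega -> R} => dotE q (s q)) @ within (finH s) (nbhs p)
    --> (g p)%:E.
Proof.
move=> hcl; have sp := closure_simplex hcl; have FF := nbhs_filter p.
have FW := within_filter (finH s) FF.
apply: cvg_EFin.
  rewrite near_withinE; apply: (nearW FF) => q [sq hf].
  by rewrite dotE_lin.
apply/(cvgrPdist_le (FF := FW)) => e e0.
rewrite near_withinE; apply: (filterS _ (g_cont sp e0)) => q h [sq hf] /=.
rewrite dotE_lin //= -g_H //; exact: h.
Qed.


Lemma part3 (pn : nat -> {ptws Omega -> R}) (p : {ptws Omega -> R})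
  (r : {ptws Omega -> \bar R}) :
  (forall n, finH s (pn n)) -> pn @ \oo --> p -> closure (finH s) p ->
  (fun n => (s (pn n) : {ptws Omega -> \bar R})) @ \oo --> r ->
  (fun n => dotE (pn n) (s (pn n))) @ \oo --> dotE p r.
Proof.
move=> hH hpn hcl hr.
have sp := closure_simplex hcl.
have FF := nbhs_filter p.
have FN : Filter (\oo : set_system nat) := eventually_filter.
have gA : (fun n => g (pn n)) @ \oo --> g p.
  apply/cvgrPdist_le => e e0.
  have := hpn _ (g_cont sp e0).
  by apply: (filterS' FN) => n /= h; exact: h (hH n).1.
have hrw : forall w, (fun n => s (pn n) w) @ \oo --> r w.
  move=> w; exact: (cvg_comp _ _ hr (@proj_continuous Omega (fun _ => \bar R) w r)).
set a := fun n => lin p (cf (pn n)).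
have C : (fun n => (a n)%:E) @ \oo --> dotE p r.
  have -> : (fun n => (a n)%:E) =
      (fun n => \sum_w ((p w)%:E * s (pn n) w))%E.
    by apply: funext => n; rewrite /a -dotE_lin //; exact: (hH n).2.
  rewrite /dotE.
  have := @cvge_sum_seq R Omega (index_enum Omega)
    (fun w n => ((p w)%:E * s (pn n) w)%E) (fun w => ((p w)%:E * r w)%E).
  case=> //.
    move=> w.
    have rM : (r w <= M%:E)%E.
      apply: (cvge_le _ (hrw w)); apply: (nearW FN) => n; exact: hM (hH n).1 w.
    have /andP[p0 _] := sp.1 w.
    move: (r w) rM => [x| |] _ //=.
    move: p0; rewrite le_eqVlt => /orP[/eqP <-|pw]; first by rewrite mul0e.
    by rewrite gt0_muleNy.
  by move=> w; apply: cvgeZl => //; exact: hrw w.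
have B : a @ \oo --> g p.
  apply/cvgrPdist_le => e e0.
  set A := `|M - g p|.
  have A0 : 0 <= A by rewrite normr_ge0.
  set t := e / (2 * (A + e + 1)).
  have t0 : 0 < t by apply: divr_gt0; lra.
  have t1 : t <= 1 by rewrite ler_pdivrMr; lra.
  have tk : t * (A + e) <= e / 2.
    rewrite /t mulrAC ler_pdivrMr; last by lra.
    have -> : e / 2 * (2 * (A + e + 1)) = e * (A + e + 1) by field.
    nra.
  have E1 : \forall n \near \oo, `|g p - g (pn n)| <= e / 2.
    by move/cvgrPdist_le : gA; apply; lra.
  have N2w : forall w, \forall q \near p, 0 < p w ->
      `|p w - (q : Omega -> R) w| < t * p w.
    move=> w; have [pp|pn0] := ltP 0 (p w).
      by apply: filterS (near_coord p w (mulr_gt0 t0 pp)) => q h _.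
    by apply: filterS (near_coord p w e0) => q _ //.
  have E2 := hpn _ (filter_forall FF N2w).
  apply: (filterS2 FN _ E1 E2) => n h1 h2 /=.
  have hn := hH n.
  have up := dec t0 sp hn.1 (fun w pw => ltW (proj2 (andP
     (eqbLR (ltr_norml _ _) (h2 w pw))))) (cf_le hn).
  rewrite -g_H // in up.
  have ale : a n <= g p by apply: g_ge.
  have MA : M - g p <= A by apply: ler_norm.
  have tMA : t * (M - g p) <= t * A by apply: ler_wpM2l => //; apply: ltW.
  have lo : g p - e / 2 <= g (pn n).
    by move: h1; rewrite ler_norml => /andP[_ ?]; lra.
  rewrite ler_norml; apply/andP; split; first by lra.
  rewrite leNgt; apply/negP => H.
  have hpos : 0 < g p - e - a n by lra.
  have t1' : 0 < 1 - t.
    suff : t < 1 by lra.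
    by rewrite /t ltr_pdivrMr; lra.
  have := mulr_gt0 t1' hpos.
  clearbody t A.
  rewrite /a in up ale H *.
  lra.
have E2 : (fun n => (a n)%:E) @ \oo --> (g p)%:E.
  apply: cvg_EFin => //; exact: (nearW FN).
have eq := cvg_unique (@ereal_hausdorff R) C E2.
rewrite eq.
have -> : (fun n => dotE (pn n) (s (pn n))) = (fun n => (g (pn n))%:E).
  by apply: funext => n; have hn := hH n; rewrite dotE_lin ?g_H //; case: hn.
apply: cvg_EFin => //; exact: (nearW FN).
Qed.

End L3.

Unset Implicit Arguments. Set Strict Implicit.

Theorem lemma3 (R : realType) (Omega : finType) (M : R)
  (s : (Omega -> R) -> (Omega -> \bar R)) :
  (forall p, simplex p -> forall w, (s p w <= M%:E)%E) ->
  proper_score s ->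
  (forall p : {ptws Omega -> R}, closure (finH s) p ->
     exists l : \bar R,
       (fun q : {ptws Omega -> R} => dotE q (s q)) @ within (finH s) (nbhs p) --> l) /\
  (forall p : {ptws Omega -> R}, closure (finH s) p ->
     (forall w, s p w \is a fin_num) ->
     (fun q : {ptws Omega -> R} => dotE q (s q)) @ within (finH s) (nbhs p)
       --> dotE p (s p)) /\
  (forall (pn : nat -> {ptws Omega -> R}) (p : {ptws Omega -> R})
          (r : {ptws Omega -> \bar R}),
     (forall n, finH s (pn n)) ->
     pn @ \oo --> p ->
     closure (finH s) p ->
     (fun n => (s (pn n) : {ptws Omega -> \bar R})) @ \oo --> r ->
     (fun n => dotE (pn n) (s (pn n))) @ \oo --> dotE p r).
Proof.
move=> hM hpr; split.
  move=> p hcl.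
  have [q0 [hq0 _]] := hcl setT (@filterT _ _ (nbhs_filter p)).
  by exists (g s p)%:E; exact: (G_cvg hM hpr hq0 hcl).
split.
  move=> p hcl hf.
  have [q0 [hq0 _]] := hcl setT (@filterT _ _ (nbhs_filter p)).
  have sp := closure_simplex hcl.
  rewrite dotE_lin // -(g_H hM hpr hq0) //.
  exact: (G_cvg hM hpr hq0 hcl).
move=> pn p r hH hpn hcl hr.
exact: (part3 hM hpr (hH 0) hH hpn hcl hr).
Qed.
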